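(* Let $\Lambda$ be a set of positive integers such that for all positive integers $a,b$: $a,b\in\Lambda$ if and only if $\operatorname{lcm}(a,b)\in\Lambda$. Suppose $\sigma=(\varepsilon,\varepsilon,\gamma;(123))$ is an autoparatopism of a Latin square $L$ of order $n$, and let $R_\Lambda=\{i\in[n]:o_\gamma(i)\in\Lambda\}$. If $R_\Lambda\ne\emptyset$, then the submatrix of $L$ with rows $R_\Lambda$ and columns $R_\Lambda$ is a subsquare of $L$ whose symbol set is $R_\Lambda$.
   Context: A Latin square $L$ of order $n$ is an $n\times n$ array with rows, columns and symbols indexed by $[n]$, in which each symbol occurs exactly once in each row and each column. Its set of triples is $O(L)$. A subsquare is a submatrix that is itself a Latin square. Permutations act on the right; $\varepsilon$ is the identity. A paratopism $(\alpha,\beta,\gamma;(123))$ maps $L$ to $L^\sigma$ with triple set $\{(z\gamma,x\alpha,y\beta):(x,y,z)\in O(L)\}$. It is an autoparatopism of $L$ if $L^\sigma=L$. $o_\pi(i)$ is the length of the cycle of $\pi$ containing $i$ (fixed points are cycles of length $1$). *)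

(* Defs.v *)
From mathcomp Require Import all_boot all_order all_fingroup.
Set Implicit Arguments. Unset Strict Implicit. Unset Printing Implicit Defensive.

(* A Latin square of order n: rows, columns, symbols indexed by 'I_n
   (i.e. [n] = {0,..,n-1}); L x y is the symbol in row x, column y. *)
Definition latin_square (n : nat) (L : 'I_n -> 'I_n -> 'I_n) : Prop :=
  (forall x : 'I_n, forall z : 'I_n, exists! y : 'I_n, L x y = z) /\
  (forall y : 'I_n, forall z : 'I_n, exists! x : 'I_n, L x y = z).

Definition triples (n : nat) (L : 'I_n -> 'I_n -> 'I_n) : {set 'I_n * 'I_n * 'I_n} :=
  [set t : 'I_n * 'I_n * 'I_n | L t.1.1 t.1.2 == t.2].

(* Triple set of L^sigma for sigma = (alpha, beta, gamma; (123)):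
   {(z gamma, x alpha, y beta) : (x,y,z) in O(L)}; permutations act on the
   right, so "x alpha" is the application alpha x. *)
Definition paratopism123_triples (n : nat) (alpha beta gamma : {perm 'I_n})
    (L : 'I_n -> 'I_n -> 'I_n) : {set 'I_n * 'I_n * 'I_n} :=
  [set (gamma t.2, alpha t.1.1, beta t.1.2) | t in triples L].

Definition autoparatopism123 (n : nat) (alpha beta gamma : {perm 'I_n})
    (L : 'I_n -> 'I_n -> 'I_n) : Prop :=
  paratopism123_triples alpha beta gamma L = triples L.

Definition cyc_len (n : nat) (pi : {perm 'I_n}) (i : 'I_n) : nat :=
  #|porbit pi i|.

Definition subsquare_with_symbols (n : nat) (L : 'I_n -> 'I_n -> 'I_n)
    (R C S : {set 'I_n}) : Prop :=
  #|R| = #|C| /\ #|S| = #|R| /\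
  (forall x y, x \in R -> y \in C -> L x y \in S) /\
  (forall x z, x \in R -> z \in S -> exists! y, y \in C /\ L x y = z) /\
  (forall y z, y \in C -> z \in S -> exists! x, x \in R /\ L x y = z).

(* Main.v *)
Require Import Defs.
From mathcomp Require Import all_boot all_order all_fingroup.

Lemma iter_mul_id (T : finType) (s : {perm T}) z k :
  iter (k * #|porbit s z|) s z = z.
Proof.
elim: k => [|k IH] //=; by rewrite mulSn iterD IH iter_porbit.
Qed.

Lemma iter_dvd (T : finType) (s : {perm T}) z m :
  iter m s z = z -> #|porbit s z| %| m.
Proof.
move=> H; set o := #|porbit s z|.
have o0 : 0 < o by rewrite lt0n card_porbit_neq0.
have Hr : iter (m %% o) s z = z.
  by rewrite -{2}H {2}(divn_eq m o) addnC iterD iter_mul_id.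
apply/dvdnP; exists (m %/ o); rewrite {1}(divn_eq m o); apply/eqP.
rewrite -{2}(addn0 (_ * _)) eqn_add2l.
have U := uniq_traject_porbit s z.
have ro : m %% o < o by rewrite ltn_mod.
have := @nth_uniq _ z (traject s z o) (m %% o) 0.
rewrite size_traject => /(_ ro o0 U).
rewrite !nth_traject //= Hr eqxx => E.
by rewrite -E.
Qed.

Lemma iter_dvd2 (T : finType) (s : {perm T}) z m d :
  d %| m -> iter d s z = z -> iter m s z = z.
Proof.
move=> /dvdnP[k ->] H; elim: k => [|k IH] //=.
by rewrite mulSn iterD IH H.
Qed.

Theorem theorem3p6 (Lambda : pred nat)
  (HLpos : forall a : nat, Lambda a -> 0 < a)
  (HLlcm : forall a b : nat, 0 < a -> 0 < b ->
             (Lambda a && Lambda b) = Lambda (lcmn a b))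
  (n : nat) (L : 'I_n -> 'I_n -> 'I_n) (gamma : {perm 'I_n})
  (HL : latin_square L)
  (Hauto : autoparatopism123 1 1 gamma L) :
  let R := [set i : 'I_n | Lambda (cyc_len gamma i)] in
  R != set0 -> subsquare_with_symbols L R R R.
Proof.
move=> R _.
have K : forall x y, L (gamma (L x y)) x = y.
  move=> x y.
  have : (gamma (L x y), x, y) \in triples L.
    rewrite -Hauto; apply/imsetP; exists (x, y, L x y).
      by rewrite inE.
    by rewrite /= !perm1.
  by rewrite inE => /eqP.
have A : forall x y, L (gamma x) (gamma y) = gamma (L x y).
  move=> x y.
  have h1 := K (gamma (L x y)) x; rewrite (K x y) in h1.
  have h2 := K (gamma y) (gamma (L x y)); rewrite h1 in h2.
  exact: h2.
have Ai : forall k x y, L (iter k gamma x) (iter k gamma y) = iter k gamma (L x y).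
  by elim=> [|k IH] x y //=; rewrite A IH.
pose o := cyc_len gamma.
have opos : forall x, 0 < o x by move=> x; rewrite lt0n card_porbit_neq0.
have og : forall x, o (gamma x) = o x.
  by move=> x; rewrite /o /cyc_len -(porbit_perm gamma 1 x) expg1.
have D : forall x y, o (L x y) %| lcmn (o x) (o y).
  move=> x y; apply: iter_dvd.
  rewrite -Ai (@iter_dvd2 _ _ x _ (o x)) ?dvdn_lcml ?iter_porbit //.
  by rewrite (@iter_dvd2 _ _ y _ (o y)) ?dvdn_lcmr ?iter_porbit.
have Ldiv : forall a c, 0 < a -> Lambda c -> a %| c -> Lambda a.
  move=> a c a0 Lc ac.
  have c0 := HLpos _ Lc.
  have : Lambda (lcmn a c) by rewrite (eqP (_ : lcmn a c == c)) // eqn_dvd dvdn_lcmr dvdn_lcm ac dvdnn.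
  by rewrite -HLlcm // => /andP[].
have Rl : forall a b c, a \in R -> b \in R -> o c %| lcmn (o a) (o b) -> c \in R.
  move=> a b c; rewrite !inE => Ha Hb Hc.
  apply: (Ldiv _ (lcmn (o a) (o b))) => //; by rewrite -HLlcm ?opos ?Ha ?Hb.
have K2 : forall x y, L (gamma y) (gamma (L x y)) = x.
  by move=> x y; have h1 := K (gamma (L x y)) x; rewrite (K x y) in h1.
have Dy : forall x y, o y %| lcmn (o (L x y)) (o x).
  by move=> x y; have := D (gamma (L x y)) x; rewrite (K x y) og.
have Dx : forall x y, o x %| lcmn (o y) (o (L x y)).
  by move=> x y; have := D (gamma y) (gamma (L x y)); rewrite K2 !og.
case: HL => HR HC.
split; first done. split; first done. split.
  by move=> x y Hx Hy; apply: (Rl x y) => //; apply: D.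
split.
  move=> x z Hx Hz; case: (HR x z) => y [Hy U]; exists y; split.
    split=> //; apply: (Rl z x) => //; rewrite -Hy; apply: Dy.
  by move=> y' [_ /U].
move=> y z Hy Hz; case: (HC y z) => x [Hx U]; exists x; split.
  split=> //; apply: (Rl y z) => //; rewrite -Hx; apply: Dx.
by move=> x' [_ /U].
Qed.
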